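(* Let $E$ be a field and $F$ a field extension of $E$. Let $X=(x_1,\dots,x_n)$ and let $$\sigma=\sum_{I\in\mathbb N^n}\alpha_IX^I\in F[[X]],\qquad \alpha_I\in F,$$ where $X^I=x_1^{i_1}\cdots x_n^{i_n}$ for $I=(i_1,\dots,i_n)$. For $1\le l\le n$ and $I\in\mathbb N^n$ define the one-variable series $$a_{I,l}=\sum_{j=0}^\infty \alpha_{J}x_l^j\in F[[x_l]],\qquad J=(i_1,\dots,i_{l-1},j,i_{l+1},\dots,i_n).$$ If $\sigma$ is algebraic over $E((X))$ (the fraction field of $E[[X]]$, viewed inside the fraction field of $F[[X]]$), then $a_{I,l}$ is algebraic over $E((x_l))$ for every $1\le l\le n$ and every $I\in\mathbb N^n$. *)

(* Defs.v *)
From HB Require Import structures.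
From mathcomp Require Import all_boot all_order all_algebra.
Set Implicit Arguments. Unset Strict Implicit. Unset Printing Implicit Defensive.
Import Order.TTheory GRing.Theory Num.Theory.
Local Open Scope ring_scope.

Definition mindex (n : nat) := {ffun 'I_n -> nat}.

Definition mseries (R : Type) (n : nat) := mindex n -> R.

Definition mbound n (I : mindex n) : nat := (\max_(i < n) I i)%N.

(* Cauchy product: (s*t)(I) = sum_{J <= I componentwise} s(J) t(I-J). *)
Definition ms_mul (R : pzRingType) n (s t : mseries R n) : mseries R n :=
  fun I => \sum_(J : {ffun 'I_n -> 'I_(mbound I).+1} | [forall i, (J i <= I i)%N])
             s [ffun i => nat_of_ord (J i)] * t [ffun i => (I i - J i)%N].

Definition ms_one (R : pzRingType) n : mseries R n :=
  fun I => if [forall i, I i == 0%N] then 1 else 0.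

Definition ms_exp (R : pzRingType) n (s : mseries R n) (k : nat) : mseries R n :=
  iter k (ms_mul s) (@ms_one R n).

Definition ms_map (E F : Type) (f : E -> F) n (s : mseries E n) : mseries F n :=
  fun I => f (s I).

(* s in F[[X]] is algebraic over E((X)) = Frac(E[[X]]), where E is embedded
   in F by the field morphism iota.  After clearing denominators this means:
   there is a polynomial sum_{k<=d} c_k Y^k with coefficients c_k in E[[X]],
   not all zero, such that sum_k c_k s^k = 0 in F[[X]]. *)
Definition ms_algebraic (E F : fieldType) (iota : {rmorphism E -> F}) n
  (s : mseries F n) : Prop :=
  exists (d : nat) (c : nat -> mseries E n),
    (exists k I, (k <= d)%N /\ c k I != 0) /\
    forall I, \sum_(k < d.+1) ms_mul (ms_map iota (c k)) (ms_exp s k) I = 0.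

Definition slice_series (F : Type) n (alpha : mseries F n) (I : mindex n) (l : 'I_n)
  : mseries F 1 :=
  fun J => alpha [ffun k => if k == l then J ord0 else I k].

(* Main.v *)
Require Import Defs.
From HB Require Import structures.
From mathcomp Require Import all_boot all_order all_algebra.
From mathcomp Require Import boolp zify ring.
Set Implicit Arguments. Unset Strict Implicit. Unset Printing Implicit Defensive.
Import GRing.Theory.
Local Open Scope ring_scope.

Section Box.
Variable n : nat.
Implicit Types I J K L : mindex n.

Definition addm I J : mindex n := [ffun i => (I i + J i)%N].
Definition subm I J : mindex n := [ffun i => (I i - J i)%N].
Definition lem J I : bool := [forall i, (J i <= I i)%N].
Definition box I : seq (mindex n) :=
  map (fun Z : {ffun 'I_n -> 'I_(mbound I).+1} => ([ffun i => nat_of_ord (Z i)] : mindex n))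
     (enum [pred Z : {ffun 'I_n -> 'I_(mbound I).+1} | [forall i, (Z i <= I i)%N]]).

Lemma lemP J I : reflect (forall i, (J i <= I i)%N) (lem J I).
Proof. exact: forallP. Qed.

Lemma mbound_ge I i : (I i <= mbound I)%N.
Proof. rewrite /mbound; exact: (@leq_bigmax _ (fun i => I i) i). Qed.

Lemma mem_box I J : (J \in box I) = lem J I.
Proof.
apply/mapP/lemP.
  case=> K; rewrite mem_enum inE => /forallP HK ->  i; rewrite ffunE; exact: HK.
move=> HJ; exists [ffun i => inord (J i) : 'I_(mbound I).+1].
  rewrite mem_enum inE; apply/forallP => i; rewrite ffunE inordK //.
  by rewrite ltnS (leq_trans (HJ i) (mbound_ge _ _)).
apply/ffunP => i; rewrite !ffunE inordK //.
by rewrite ltnS (leq_trans (HJ i) (mbound_ge _ _)).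
Qed.

Lemma uniq_box I : uniq (box I).
Proof.
rewrite map_inj_uniq ?enum_uniq // => J K /ffunP H; apply/ffunP => i.
by apply: val_inj; have := H i; rewrite !ffunE.
Qed.

Lemma box_perm I s : uniq s -> (forall J, (J \in s) = lem J I) -> perm_eq s (box I).
Proof.
by move=> us hs; apply: uniq_perm => // [|J]; [exact: uniq_box | rewrite hs mem_box].
Qed.

Lemma lem_refl I : lem I I. Proof. by apply/lemP. Qed.
Lemma lem_trans J I K : lem J I -> lem I K -> lem J K.
Proof. by move=> /lemP h1 /lemP h2; apply/lemP => i; apply: leq_trans (h1 i) (h2 i). Qed.

Lemma ms_mulE (R : pzRingType) (s t : mseries R n) I :
  ms_mul s t I = \sum_(J <- box I) s J * t (subm I J).
Proof.
rewrite /ms_mul /box big_map big_filter /=.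
rewrite /index_enum -enumT /=.
apply: eq_big => [J|J _]; first by rewrite inE.
congr (_ * t _).
by apply/ffunP => i; rewrite !ffunE.
Qed.

End Box.

Definition ps (R : Type) (n : nat) : Type := mseries R n.
HB.instance Definition _ (R : Type) n := gen_eqMixin (ps R n).
HB.instance Definition _ (R : Type) n := gen_choiceMixin (ps R n).

Section PSZmod.
Variables (R : zmodType) (n : nat).
Implicit Types s t u : ps R n.
Definition ps_zero : ps R n := fun _ => 0.
Definition ps_add s t : ps R n := fun I => s I + t I.
Definition ps_opp s : ps R n := fun I => - s I.
Lemma ps_addA : associative ps_add.
Proof. by move=> s t u; apply: funext => I; rewrite /ps_add addrA. Qed.
Lemma ps_addC : commutative ps_add.
Proof. by move=> s t; apply: funext => I; rewrite /ps_add addrC. Qed.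
Lemma ps_add0 : left_id ps_zero ps_add.
Proof. by move=> s; apply: funext => I; rewrite /ps_add add0r. Qed.
Lemma ps_addN : left_inverse ps_zero ps_opp ps_add.
Proof. by move=> s; apply: funext => I; rewrite /ps_add /ps_opp addNr. Qed.
HB.instance Definition _ := GRing.isZmodule.Build (ps R n) ps_addA ps_addC ps_add0 ps_addN.
Lemma psE0 I : (0 : ps R n) I = 0. Proof. by []. Qed.
Lemma psED s t I : (s + t) I = s I + t I. Proof. by []. Qed.
Lemma psEN s I : (- s) I = - s I. Proof. by []. Qed.
Lemma psEB s t I : (s - t) I = s I - t I. Proof. by []. Qed.
Lemma psE_sum (T : Type) (r : seq T) (P : pred T) (F : T -> ps R n) I :
  (\sum_(i <- r | P i) F i) I = \sum_(i <- r | P i) F i I.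
Proof. by elim/big_rec2: _ => // i y1 y2 _ <-. Qed.
End PSZmod.

Section BoxLemmas.
Variable n : nat.
Implicit Types I J K L : mindex n.

Lemma box_restrict (V : zmodType) (f : mindex n -> V) I L : lem L I ->
  \sum_(K <- box L) f K = \sum_(K <- box I | lem K L) f K.
Proof.
move=> hLI; rewrite -[RHS]big_filter.
have H : perm_eq [seq K <- box I | lem K L] (box L).
  apply: box_perm; first by rewrite filter_uniq ?uniq_box.
  move=> K; rewrite mem_filter mem_box; apply/andP/idP => [[] //|hKL].
  by split=> //; apply: lem_trans hKL hLI.
by rewrite (perm_big _ H).
Qed.

Lemma addmK J K : subm (addm J K) J = K.
Proof. by apply/ffunP => i; rewrite !ffunE addKn. Qed.

Lemma subm_addm I J K : subm I (addm J K) = subm (subm I J) K.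
Proof. by apply/ffunP => i; rewrite !ffunE subnDA. Qed.

Lemma addm_inj J : injective (addm J).
Proof. by move=> K L /ffunP h; apply/ffunP => i; have := h i; rewrite !ffunE => /addnI. Qed.

Lemma box_shift I J : lem J I ->
  perm_eq (map (addm J) (box (subm I J))) [seq L <- box I | lem J L].
Proof.
move=> /lemP hJI; apply: uniq_perm.
- by rewrite map_inj_uniq ?uniq_box //; apply: addm_inj.
- by rewrite filter_uniq ?uniq_box.
move=> L; rewrite mem_filter mem_box; apply/mapP/andP.
  case=> K; rewrite mem_box => /lemP hK ->; split; apply/lemP => i; rewrite !ffunE //.
    exact: leq_addr.
  have := hK i; have := hJI i; rewrite ffunE; lia.
move=> [/lemP h1 /lemP h2]; exists (subm L J).
  rewrite mem_box; apply/lemP => i; rewrite !ffunE; have := h1 i; have := h2 i; lia.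
by apply/ffunP => i; rewrite !ffunE subnKC.
Qed.

Lemma box_rev I : perm_eq (map (subm I) (box I)) (box I).
Proof.
apply: box_perm.
  rewrite map_inj_in_uniq ?uniq_box // => J K; rewrite !mem_box => /lemP h1 /lemP h2 /ffunP h.
  apply/ffunP => i; have := h i; rewrite !ffunE => e.
  by rewrite -(subKn (h1 i)) e subKn.
move=> J; apply/mapP/lemP.
  by case=> K _ -> i; rewrite ffunE leq_subr.
move=> h; exists (subm I J); first by rewrite mem_box; apply/lemP => i; rewrite ffunE leq_subr.
by apply/ffunP => i; rewrite !ffunE subKn.
Qed.

Lemma subm_subm I J : lem J I -> subm I (subm I J) = J.
Proof. by move=> /lemP h; apply/ffunP => i; rewrite !ffunE subKn. Qed.

Definition m0 : mindex n := [ffun _ => 0%N].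
Lemma m0_box I : m0 \in box I.
Proof. by rewrite mem_box; apply/lemP => i; rewrite ffunE. Qed.
Lemma subm0 I : subm I m0 = I.
Proof. by apply/ffunP => i; rewrite !ffunE subn0. Qed.
Lemma m0E J : [forall i, J i == 0%N] = (J == m0).
Proof.
apply/forallP/eqP => [h|-> i]; last by rewrite ffunE.
by apply/ffunP => i; rewrite ffunE; apply/eqP.
Qed.
End BoxLemmas.

Section PSRing.
Variables (R : comNzRingType) (n : nat).
Implicit Types s t u : ps R n.

Definition ps_mul s t : ps R n := ms_mul s t.
Definition ps_one : ps R n := @ms_one R n.

Lemma ps_mulA : associative ps_mul.
Proof.
move=> s t u; apply: funext => I; rewrite /ps_mul !ms_mulE.
under eq_bigr do rewrite ms_mulE.
under [RHS]eq_bigr do rewrite ms_mulE.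
transitivity (\sum_(J <- box I) \sum_(L <- box I | lem J L)
                s J * (t (subm L J) * u (subm I L))).
  rewrite big_seq [RHS]big_seq; apply: eq_bigr => J hJ.
  rewrite mem_box in hJ.
  rewrite mulr_sumr -[RHS]big_filter -(perm_big _ (box_shift hJ)) [RHS]big_map.
  by apply: eq_bigr => K _; rewrite addmK subm_addm.
rewrite (exchange_big_dep xpredT) //= big_seq [RHS]big_seq.
apply: eq_bigr => L hL; rewrite mem_box in hL.
rewrite (box_restrict _ hL) mulr_suml.
by apply: eq_bigr => J _; rewrite mulrA.
Qed.

Lemma ps_mulC : commutative ps_mul.
Proof.
move=> s t; apply: funext => I; rewrite /ps_mul !ms_mulE.
rewrite -[RHS](perm_big _ (box_rev I)) [RHS]big_map big_seq [RHS]big_seq.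
apply: eq_bigr => J hJ; rewrite mem_box in hJ.
by rewrite subm_subm // mulrC.
Qed.

Lemma ps_mul1 : left_id ps_one ps_mul.
Proof.
move=> s; apply: funext => I; rewrite /ps_mul ms_mulE.
rewrite (bigD1_seq (m0 n)) ?m0_box ?uniq_box //= /ps_one /ms_one m0E eqxx mul1r subm0.
rewrite big1 ?addr0 // => J hJ; rewrite m0E (negbTE hJ) mul0r //.
Qed.

Lemma ps_mulDl : left_distributive ps_mul (@ps_add R n).
Proof.
move=> s t u; apply: funext => I; rewrite /ps_mul /ps_add !ms_mulE -big_split /=.
by apply: eq_bigr => J _; rewrite mulrDl.
Qed.

Lemma ps_one_neq0 : ps_one != @ps_zero R n.
Proof.
apply/eqP => /(congr1 (fun f => f (m0 n))); rewrite /ps_one /ms_one m0E eqxx /ps_zero.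
by move/eqP; rewrite oner_eq0.
Qed.

HB.instance Definition _ := GRing.Zmodule_isComNzRing.Build (ps R n)
  ps_mulA ps_mulC ps_mul1 ps_mulDl ps_one_neq0.

Lemma psM s t : s * t = ms_mul s t. Proof. by []. Qed.
Lemma ps1 : (1 : ps R n) = @ms_one R n. Proof. by []. Qed.
Lemma psX s k : s ^+ k = ms_exp s k.
Proof. by elim: k => [|k IH]; rewrite ?expr0 // exprS IH. Qed.
End PSRing.

Section PSMap.
Variables (E F : comNzRingType) (f : {rmorphism E -> F}) (n : nat).
Definition psmap (s : ps E n) : ps F n := ms_map f s.
Lemma psmap_zmod : zmod_morphism psmap.
Proof. by move=> s t; apply: funext => I; rewrite /psmap /ms_map psEB rmorphB. Qed.
Lemma psmap_monoid : monoid_morphism psmap.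
Proof.
split.
  apply: funext => I; rewrite /psmap /ms_map /= !ps1 /ms_one.
  by case: ifP; rewrite ?rmorph1 ?rmorph0.
move=> s t; apply: funext => I; rewrite /psmap /ms_map !psM !ms_mulE rmorph_sum.
by apply: eq_bigr => J _; rewrite rmorphM.
Qed.
HB.instance Definition _ := GRing.isZmodMorphism.Build (ps E n) (ps F n) psmap psmap_zmod.
HB.instance Definition _ := GRing.isMonoidMorphism.Build (ps E n) (ps F n) psmap psmap_monoid.
Lemma psmapE s I : psmap s I = f (s I). Proof. by []. Qed.
End PSMap.

Section PSMisc.
Variables (R : comNzRingType) (n : nat).
Implicit Types s t : ps R n.

Definition mono (M : mindex n) : ps R n := fun I => if I == M then 1 else 0.

Lemma mulmono M s I :
  (mono M * s) I = if lem M I then s (subm I M) else 0.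
Proof.
rewrite psM ms_mulE; case: ifP => hM.
  rewrite (bigD1_seq M) ?mem_box ?uniq_box //= /mono eqxx mul1r big1 ?addr0 //.
  by move=> J /negbTE ->; rewrite mul0r.
rewrite big_seq big1 // => J; rewrite mem_box /mono => hJ.
by case: eqP => [eJ|_]; rewrite ?mul0r //; move: hJ hM; rewrite eJ => ->.
Qed.

Lemma mono_cancel M s : mono M * s = 0 -> s = 0.
Proof.
move=> h; apply: funext => I; have := congr1 (fun g => g (addm M I)) h.
rewrite mulmono psE0 addmK; case: ifP => // /negP[]; apply/lemP => i.
by rewrite ffunE leq_addr.
Qed.

Lemma ps_neq0 s : s != 0 -> exists I, s I != 0.
Proof.
move=> hs; case: (pselect (exists I, s I != 0)) => // hn; exfalso.
move/eqP: hs; apply; apply: funext => I; apply/eqP; apply/negPn/negP => hI.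
by apply: hn; exists I.
Qed.

Lemma ps_eq0 s : (forall I, s I = 0) -> s = 0.
Proof. by move=> h; apply: funext => I; rewrite h. Qed.

End PSMisc.

Section Lex.
Variable n : nat.
Definition lexmin (P : mindex n -> Prop) k (I0 : mindex n) :=
  P I0 /\ forall I, P I ->
    (forall i : 'I_n, (i < k)%N -> I i = I0 i) \/
    (exists i : 'I_n, [/\ (i < k)%N, (I0 i < I i)%N &
        forall i' : 'I_n, (i' < i)%N -> I i' = I0 i']).

Lemma lexmin_ex P k : (exists I, P I) -> exists I0, lexmin P k I0.
Proof.
move=> [Ia PIa]; elim: k => [|k [I0 [PI0 hI0]]].
  by exists Ia; split=> // I _; left.
case: (ltnP k n) => [hk|hk]; last first.
  exists I0; split=> // I /hI0 [h|[i [h1 h2 h3]]].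
    by left=> i _; apply: h; apply: leq_trans (ltn_ord i) hk.
  by right; exists i; split=> //; apply: ltnW.
pose kk := Ordinal hk.
pose Q I := P I /\ forall i : 'I_n, (i < k)%N -> I i = I0 i.
have hex : exists m, (fun m => `[< exists I, Q I /\ I kk = m >]) m.
  by exists (I0 kk); apply/asboolP; exists I0.
case: (ex_minnP hex) => m /asboolP [I1 [[PI1 agr] e]] hmin.
exists I1; split=> // I PI.
case: (hI0 I PI) => [h|[i [h1 h2 h3]]].
  have hm : (m <= I kk)%N by apply: hmin; apply/asboolP; exists I.
  case: (ltngtP m (I kk)) hm => // [lt|eq] _.
    right; exists kk; split=> //; first by rewrite e.
    by move=> i' hi'; rewrite h // agr.
  left=> i; rewrite ltnS leq_eqVlt => /orP[/eqP hi|hi]; last by rewrite h // agr.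
  have -> : i = kk by apply: val_inj.
  by rewrite e.
right; exists i; split; first exact: ltnW.
  by rewrite agr.
by move=> i' hi'; rewrite h3 // agr //; apply: ltn_trans hi' h1.
Qed.

Lemma lexmin_mul (R : idomainType) (s t : ps R n) I0 J0 :
  lexmin (fun I => s I != 0) n I0 -> lexmin (fun I => t I != 0) n J0 ->
  (s * t) (addm I0 J0) = s I0 * t J0.
Proof.
move=> [sI0 hI0] [tJ0 hJ0]; rewrite psM ms_mulE.
rewrite (bigD1_seq I0) ?uniq_box //=; last first.
  by rewrite mem_box; apply/lemP => i; rewrite ffunE leq_addr.
rewrite addmK big_seq_cond big1 ?addr0 // => J /andP[]; rewrite mem_box => /lemP hJ hJI0.
case: (eqVneq (s J) 0) => [->|sJ]; first by rewrite mul0r.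
case: (eqVneq (t (subm (addm I0 J0) J)) 0) => [->|tK]; first by rewrite mulr0.
exfalso; case: (hI0 J sJ) => [h|[i [_ lt1 ag1]]].
  by move/eqP: hJI0; apply; apply/ffunP => i; apply: h.
set K := subm (addm I0 J0) J in tK.
have hKi : (K i < J0 i)%N.
  have := hJ i; rewrite /K !ffunE; move: lt1; lia.
case: (hJ0 K tK) => [h|[i' [_ lt2 ag2]]].
  by move: hKi; rewrite h // ltnn.
case: (ltngtP i i') => [lt|lt|eq].
- by move: hKi; rewrite ag2 // ltnn.
- move: lt2; rewrite /K !ffunE (ag1 _ lt); lia.
- have ei : i = i' by apply: val_inj.
  by move: lt2; rewrite -ei ltnNge ltnW.
Qed.

Lemma ps_mul_neq0 (R : idomainType) (s t : ps R n) : s != 0 -> t != 0 -> s * t != 0.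
Proof.
move=> /ps_neq0 hs /ps_neq0 ht.
have [I0 hI0] := lexmin_ex n hs.
have [J0 hJ0] := lexmin_ex n ht.
apply/eqP => /(congr1 (fun g => g (addm I0 J0))); rewrite (lexmin_mul hI0 hJ0) psE0.
by move/eqP; rewrite mulf_eq0; case: hI0 => /negbTE -> _; case: hJ0 => /negbTE -> _.
Qed.
End Lex.

Section Ev.
Variables (R : comNzRingType) (n : nat) (j : 'I_n).
Definition ev (s : ps R n) : ps R n := fun I => if I j == 0%N then s I else 0.
Lemma ev_zmod : zmod_morphism ev.
Proof. by move=> s t; apply: funext => I; rewrite /ev !psEB; case: ifP; rewrite ?subr0. Qed.
Lemma ev_monoid : monoid_morphism ev.
Proof.
split.
  apply: funext => I; rewrite /ev ps1 /ms_one; case: eqP => // hI.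
  by case: ifP => // /forallP /(_ j) /eqP.
move=> s t; apply: funext => I; rewrite /ev !psM !ms_mulE.
case: eqP => hI.
  rewrite big_seq [RHS]big_seq; apply: eq_bigr => J; rewrite mem_box => /lemP hJ.
  have hJj : J j = 0%N by apply/eqP; rewrite -leqn0 -hI hJ.
  by rewrite hJj eqxx ffunE hI hJj.
rewrite big_seq big1 // => J; rewrite mem_box => /lemP hJ.
case: eqP => hJj; rewrite ?mul0r // ffunE hJj subn0.
by move/eqP/negbTE: hI => ->; rewrite mulr0.
Qed.
HB.instance Definition _ := GRing.isZmodMorphism.Build (ps R n) (ps R n) ev ev_zmod.
HB.instance Definition _ := GRing.isMonoidMorphism.Build (ps R n) (ps R n) ev ev_monoid.
End Ev.

Section Rel.
Variables (E F : fieldType) (iota : {rmorphism E -> F}) (n : nat).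
Local Notation phi := (@psmap _ _ iota n).

Definition alg_rel (s : ps F n) := exists d (c : nat -> ps E n),
  (exists k, (k <= d)%N /\ c k != 0) /\ \sum_(k < d.+1) phi (c k) * s ^+ k = 0.

Lemma ms_algebraicE (s : ps F n) : ms_algebraic iota s <-> alg_rel s.
Proof.
split.
  move=> [d [c [[k [I0 [hk hI]]] hrel]]]; exists d, c; split.
    exists k; split=> //; apply/eqP => hc; move: hI; rewrite hc psE0 eqxx //.
  apply: ps_eq0 => I; rewrite psE_sum -[RHS](hrel I).
  by apply: eq_bigr => k1 _; rewrite psM psX.
move=> [d [c [[k [hk hc]] hrel]]]; exists d, c; split.
  by have [I hI] := ps_neq0 hc; exists k, I.
move=> I; have := congr1 (fun g => g I) hrel; rewrite psE_sum psE0 => H; rewrite -[RHS]H.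
by apply: eq_bigr => k1 _; rewrite psM psX.
Qed.

Lemma psmapM (a b : ps E n) : phi (a * b) = phi a * phi b.
Proof. exact: rmorphM. Qed.

Lemma psmap_ev j s : phi (ev j s) = ev j (phi s).
Proof. by apply: funext => I; rewrite /ev !psmapE; case: ifP; rewrite ?rmorph0. Qed.

Lemma psmap_mono M : phi (@mono E n M) = @mono F n M.
Proof. by apply: funext => I; rewrite psmapE /mono; case: ifP; rewrite ?rmorph0 ?rmorph1. Qed.

Lemma rel_ev j s : alg_rel s -> alg_rel (ev j s).
Proof.
move=> [d [c [[k0 [hk0 hc0]] hrel]]].
have [I0 hI0] := ps_neq0 hc0.
have hex : exists m, (fun m => `[< exists k I, [/\ (k <= d)%N, c k I != 0 & I j = m] >]) m.
  by exists (I0 j); apply/asboolP; exists k0, I0.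
case: (ex_minnP hex) => m /asboolP [k1 [I1 [hk1 hcI1 hI1j]]] hmin.
pose M : mindex n := [ffun i => if i == j then m else 0%N].
pose c' k : ps E n := fun I => c k (addm M I).
have hc k : (k <= d)%N -> c k = @mono E n M * c' k.
  move=> hk; apply: funext => I; rewrite mulmono; case: ifP => hMI.
    rewrite /c'; congr (c k _); apply/ffunP => i; rewrite !ffunE.
    by move/lemP: hMI => /(_ i); rewrite ffunE => h; rewrite subnKC.
  apply/eqP; apply: contraFT hMI => hkI.
  have hm : (m <= I j)%N by apply: hmin; apply/asboolP; exists k, I.
  apply/lemP => i; rewrite ffunE; case: eqP => [->|_] //.
have hrel' : \sum_(k < d.+1) phi (c' k) * s ^+ k = 0.
  apply: (@mono_cancel _ _ M); rewrite mulr_sumr -[RHS]hrel.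
  apply: eq_bigr => k _; rewrite (hc k) ?psmapM ?psmap_mono ?mulrA //; last by rewrite -ltnS ltn_ord.
exists d, (fun k => ev j (c' k)); split.
  exists k1; split=> //; apply/eqP => /(congr1 (fun g => g [ffun i => if i == j then 0%N else I1 i])).
  rewrite /ev psE0 ffunE eqxx /c' => /eqP; apply/negP; move: hcI1.
  congr (c k1 _ != 0); apply/ffunP => i; rewrite !ffunE; case: eqP => [->|] //.
  by rewrite hI1j addn0.
have := congr1 (ev j) hrel'; rewrite rmorph_sum rmorph0 => H; rewrite -[RHS]H.
by apply: eq_bigr => k _; rewrite rmorphM rmorphXn psmap_ev.
Qed.
End Rel.

Section Alg.
Variables (E F : fieldType) (iota : {rmorphism E -> F}) (n : nat).
Local Notation phi := (@psmap _ _ iota n).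

Definition alg (u : ps F n) := exists2 a : ps E n, a != 0 & integralOver phi (phi a * u).

Lemma phi_eq0 (a : ps E n) : phi a = 0 -> a = 0.
Proof.
move=> h; apply: funext => I; have := congr1 (fun g => g I) h.
by rewrite psmapE psE0 => /eqP; rewrite fmorph_eq0 => /eqP.
Qed.

Lemma expps_neq0 (a : ps E n) k : a != 0 -> a ^+ k != 0.
Proof.
move=> ha; elim: k => [|k IH]; first by rewrite expr0 oner_neq0.
by rewrite exprS; apply: ps_mul_neq0.
Qed.

Lemma rel_alg u : alg_rel iota u -> alg u.
Proof.
move=> [d [c [[k0 [hk0 hc0]] hrel]]].
have hex : exists k, (k <= d)%N && (c k != 0) by exists k0; rewrite hk0.
have hub : forall k, (k <= d)%N && (c k != 0) -> (k <= d)%N by move=> k /andP[].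
case: (ex_maxnP hex hub) => D /andP[hDd hcD] hmax.
have hrelD : \sum_(k < D.+1) phi (c k) * u ^+ k = 0.
  rewrite -[RHS]hrel -(big_mkord xpredT (fun k => phi (c k) * u ^+ k)).
  rewrite -(big_mkord xpredT (fun k => phi (c k) * u ^+ k)).
  rewrite [RHS](@big_cat_nat _ _ _ D.+1) //=.
  rewrite [X in _ = _ + X]big_nat_cond [X in _ = _ + X]big1 ?addr0 // => k /andP[/andP[hk1 hk2] _].
  case: (eqVneq (c k) 0) => [->|hck]; first by rewrite rmorph0 mul0r.
  by have := hmax k; rewrite -ltnS hk2 hck /= => /(_ isT); rewrite leqNgt hk1.
case: D hDd hcD hmax hrelD => [|D'] hDd hcD hmax hrelD.
  move: hrelD; rewrite big_ord1 expr0 mulr1 => /phi_eq0 h.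
  by move: hcD; rewrite h eqxx.
set a := c D'.+1.
exists a => //.
pose p : {poly ps E n} := \poly_(i < D'.+2) (if i == D'.+1 then 1 else c i * a ^+ (D' - i)).
exists p.
  rewrite monicE lead_coef_poly //= ?eqxx //; exact: oner_neq0.
rewrite /root /p poly_def rmorph_sum horner_sum; apply/eqP.
rewrite big_ord_recr /= eqxx map_polyZ map_polyXn hornerZ hornerXn rmorph1 mul1r.
transitivity (phi a ^+ D' * \sum_(k < D'.+2) phi (c k) * u ^+ k); last by rewrite hrelD mulr0.
rewrite [X in _ = _ * X]big_ord_recr /= mulrDr; congr (_ + _); last first.
  by rewrite exprMn exprSr !mulrA.
rewrite mulr_sumr; apply: eq_bigr => i _.
rewrite map_polyZ map_polyXn hornerZ hornerXn (ltn_eqF (ltn_ord i)) rmorphM rmorphXn.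
have hi : (i <= D')%N by rewrite -ltnS.
rewrite exprMn [RHS]mulrCA -mulrA; congr (_ * _); rewrite mulrA -exprD subnK //.
Qed.

Lemma alg_rel_of u : alg u -> alg_rel iota u.
Proof.
move=> [a ha [p mp rp]].
have hs : size (map_poly phi p) = size p.
  by apply: size_map_poly_id0; rewrite (eqP mp) rmorph1 oner_neq0.
have p0 : (0 < size p)%N by rewrite size_poly_gt0 monic_neq0.
exists (size p).-1, (fun k => p`_k * a ^+ k); split.
  exists (size p).-1; split=> //.
  by rewrite -lead_coefE (eqP mp) mul1r expps_neq0.
move: rp; rewrite /root horner_coef hs => /eqP H; rewrite -[RHS]H.
rewrite prednK //; apply: eq_bigr => i _.
by rewrite coef_map rmorphM rmorphXn exprMn mulrA.
Qed.

Lemma alg_sub u v : alg u -> alg v -> alg (u - v).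
Proof.
move=> [a ha hu] [b hb hv]; exists (a * b); first exact: ps_mul_neq0.
have -> : phi (a * b) * (u - v) = phi b * (phi a * u) - phi a * (phi b * v).
  by rewrite rmorphM; ring.
by apply: integral_sub; apply: integral_mul => //; apply: integral_id.
Qed.

Lemma alg_cancel (b : ps E n) u : b != 0 -> alg (phi b * u) -> alg u.
Proof.
move=> hb [a ha hu]; exists (a * b); first exact: ps_mul_neq0.
by rewrite rmorphM -mulrA.
Qed.

Lemma alg_ev j u : alg u -> alg (ev j u).
Proof. by move=> /alg_rel_of /rel_ev /rel_alg. Qed.
End Alg.

Section Key.
Variables (E F : fieldType) (iota : {rmorphism E -> F}) (n : nat).
Local Notation phi := (@psmap _ _ iota n).

Definition ej (j : 'I_n) : mindex n := [ffun i => nat_of_bool (i == j)].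
Definition down j (s : ps F n) : ps F n := fun I => s (addm (ej j) I).

Lemma down_eq j s : @mono F n (ej j) * down j s = s - ev j s.
Proof.
apply: funext => I; rewrite mulmono psEB /ev /down.
case: ifP => [/lemP h|h].
  have hj : I j != 0%N by have := h j; rewrite ffunE eqxx; case: (I j).
  rewrite (negbTE hj) subr0; congr (s _); apply/ffunP => i; rewrite !ffunE.
  by rewrite subnKC //; have := h i; rewrite ffunE.
case: eqP => [_|hj]; first by rewrite subrr.
exfalso; move/negP: h; apply; apply/lemP => i; rewrite ffunE.
by case: eqP => [->|] //=; case: (I j) hj.
Qed.

Lemma mono_neq0 (R : comNzRingType) M : @mono R n M != 0.
Proof.
apply/eqP => /(congr1 (fun g => g M)); rewrite /mono eqxx psE0.
by move/eqP; rewrite oner_eq0.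
Qed.

Lemma alg_down j s : alg iota s -> alg iota (down j s).
Proof.
move=> hs; apply: (@alg_cancel _ _ iota n (@mono E n (ej j))); first exact: mono_neq0.
by rewrite psmap_mono down_eq; apply: alg_sub => //; apply: alg_ev.
Qed.

Lemma iter_downE j m s I :
  iter m (down j) s I = s (addm [ffun i => if i == j then m else 0%N] I).
Proof.
elim: m I => [|m IH] I /=.
  by congr (s _); apply/ffunP => i; rewrite !ffunE; case: ifP.
rewrite /down IH; congr (s _); apply/ffunP => i; rewrite !ffunE.
by case: ifP => _ //=; rewrite addnA addn1.
Qed.
End Key.

Section Emb.
Variables (R : comNzRingType) (n : nat) (l : 'I_n).
Definition offl (J : mindex n) : bool := [forall k, (k != l) ==> (J k == 0%N)].
Definition embS (w : ps R 1) : ps R n :=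
  fun J => if offl J then w [ffun _ => J l] else 0.
Definition setl (J : mindex n) (t : mindex 1) : mindex n :=
  [ffun k => if k == l then t ord0 else J k].
Definition sect (J : mindex n) (c : ps R n) : ps R 1 := fun t => c (setl J t).

Lemma ord1E (i : 'I_1) : i = ord0. Proof. exact: ord1. Qed.

Lemma cross c w J : (c * embS w) J = (sect J c * w) [ffun _ => J l].
Proof.
rewrite !psM !ms_mulE.
pose agree (K : mindex n) := [forall k, (k != l) ==> (K k == J k)].
transitivity (\sum_(K <- box J | agree K) c K * w [ffun _ => (J l - K l)%N]).
  rewrite [RHS]big_mkcond big_seq [RHS]big_seq; apply: eq_bigr => K.
  rewrite mem_box => /lemP hK; rewrite /embS.
  have -> : offl (subm J K) = agree K.
    apply/forallP/forallP => h k; have := h k; rewrite !ffunE; case: (k != l) => //= /eqP.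
      by move=> e; rewrite eqn_leq hK /= -subn_eq0 e.
    by move=> ->; rewrite subnn.
  by case: ifP; rewrite ?mulr0 // ffunE.
have hp : perm_eq [seq setl J t | t <- box [ffun _ : 'I_1 => J l]] [seq K <- box J | agree K].
  apply: uniq_perm.
  - rewrite map_inj_uniq ?uniq_box // => t t' /ffunP /(_ l); rewrite !ffunE eqxx => e.
    by apply/ffunP => i; rewrite (ord1E i).
  - by rewrite filter_uniq ?uniq_box.
  move=> L; rewrite mem_filter mem_box; apply/mapP/andP.
    case=> t; rewrite mem_box => /lemP ht ->; split.
      by apply/forallP => k; rewrite !ffunE; case: eqP => [->|_]; rewrite ?eqxx //=.
    apply/lemP => k; rewrite ffunE; case: eqP => [->|] //.
    by have := ht ord0; rewrite ffunE.
  move=> [/forallP ha /lemP hl]; exists [ffun _ => L l].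
    by rewrite mem_box; apply/lemP => i; rewrite !ffunE.
  apply/ffunP => k; rewrite !ffunE; case: eqP => [->|/eqP hk] //.
  by have := ha k; rewrite hk => /eqP.
rewrite -big_filter -(perm_big _ hp) big_map; apply: eq_bigr => t _.
rewrite /sect; congr (_ * w _); apply/ffunP => i; rewrite !ffunE (ord1E i) eqxx //.
Qed.

Lemma offl_setl J t : offl (setl J t) = offl J.
Proof.
by apply: eq_forallb => k; rewrite ffunE; case: eqP.
Qed.

Lemma embSM v w : embS (v * w) = embS v * embS w.
Proof.
apply: funext => J; rewrite cross.
case hJ: (offl J).
  have -> : sect J (embS v) = v.
    apply: funext => t; rewrite /sect /embS offl_setl hJ; congr (v _).
    by apply/ffunP => i; rewrite !ffunE eqxx (ord1E i).
  by rewrite /embS hJ mulrC.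
have -> : sect J (embS v) = 0 by apply: funext => t; rewrite /sect /embS offl_setl hJ.
by rewrite mul0r /embS hJ.
Qed.

Lemma embS1 : embS 1 = 1.
Proof.
apply: funext => J; rewrite /embS !ps1 /ms_one.
case hJ: (offl J).
  congr (if _ then _ else _); apply/forallP/forallP => h i.
    case: (eqVneq i l) => [->|hil]; first by have := h ord0; rewrite ffunE.
    by move/forallP: hJ => /(_ i); rewrite hil.
  by rewrite ffunE h.
case: ifP => // /forallP h; exfalso; move/negP: hJ; apply; apply/forallP => k.
by rewrite h implybT.
Qed.

Lemma embSX w k : embS (w ^+ k) = embS w ^+ k.
Proof. by elim: k => [|k IH]; rewrite ?expr0 ?embS1 // !exprS embSM IH. Qed.
End Emb.

Section Final.
Variables (E F : fieldType) (iota : {rmorphism E -> F}) (n : nat).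
Variables (sigma : ps F n) (I : mindex n).

Definition rho (S : seq 'I_n) : ps F n :=
  foldr (fun j r => ev j (iter (I j) (down j) r)) sigma S.

Lemma alg_rho S : alg iota sigma -> alg iota (rho S).
Proof.
move=> h; elim: S => //= j S IH; apply: alg_ev.
by elim: (I j) => //= m IHm; apply: alg_down.
Qed.

Lemma rhoE S J : uniq S -> rho S J =
  if all (fun j => J j == 0%N) S then sigma [ffun k => if k \in S then (I k + J k)%N else J k]
  else 0.
Proof.
elim: S J => [|j S IH] J /=.
  by move=> _; congr (sigma _); apply/ffunP => k; rewrite ffunE.
move=> /andP[jS uS]; rewrite /ev iter_downE IH //.
case: eqP => [hJj|hJj] /=; last by [].
set J' := addm _ J.
have hall : all (fun j0 => J' j0 == 0%N) S = all (fun j0 => J j0 == 0%N) S.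
  apply: eq_in_all => k kS; rewrite /J' !ffunE.
  have hkj : k != j by apply: contraNneq jS => <-.
  by rewrite (negbTE hkj) add0n.
rewrite hall; case: ifP => // _; congr (sigma _); apply/ffunP => k; rewrite !ffunE in_cons.
case: (eqVneq k j) => [->|hkj] /=; first by rewrite hJj addn0 (negbTE jS).
by rewrite !add0n.
Qed.
End Final.

Theorem lemma3p1 (E F : fieldType) (iota : {rmorphism E -> F}) (n : nat)
  (sigma : mseries F n) :
  ms_algebraic iota sigma ->
  forall (l : 'I_n) (I : mindex n), ms_algebraic iota (slice_series sigma I l).
Proof.
move=> /(@ms_algebraicE _ _ iota n sigma) /rel_alg halg l I.
pose S := [seq j <- enum 'I_n | j != l].
have uS : uniq S by rewrite filter_uniq ?enum_uniq.
have := alg_rho I S halg => /alg_rel_of [d [c [[k0 [hk0 hc0]] hrel]]].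
have [I0 hI0] := ps_neq0 hc0.
set w : ps F 1 := slice_series sigma I l.
have hrho : rho sigma I S = embS l w.
  apply: funext => J; rewrite rhoE // /embS.
  have -> : all (fun j => J j == 0%N) S = offl l J.
    apply/allP/forallP => h k.
      by apply/implyP => hk; apply: h; rewrite mem_filter hk mem_enum.
    by rewrite mem_filter mem_enum => /andP[hk _]; move: (h k); rewrite hk.
  case: ifP => // /forallP hJ; rewrite /w /slice_series; congr (sigma _).
  apply/ffunP => k; rewrite !ffunE mem_filter mem_enum andbT.
  case: (eqVneq k l) => [->|hk] //=.
  by move: (hJ k); rewrite hk /= => /eqP ->; rewrite addn0.
apply/(@ms_algebraicE _ _ iota 1 w).
exists d, (fun k => sect l I0 (c k)); split.
  exists k0; split=> //; apply/eqP => /(congr1 (fun g => g [ffun _ => I0 l])).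
  rewrite /sect psE0 (_ : setl l I0 [ffun=> I0 l] = I0); first by move=> h; move: hI0; rewrite h eqxx.
  by apply/ffunP => k; rewrite !ffunE; case: eqP => [->|].
apply: ps_eq0 => t; rewrite psE_sum.
have := congr1 (fun g => g (setl l I0 t)) hrel; rewrite psE_sum psE0 => H.
rewrite -[RHS]H; apply: eq_bigr => k _.
rewrite hrho -embSX cross.
have e1 : sect l (setl l I0 t) (psmap iota (c k)) = psmap iota (sect l I0 (c k)).
  apply: funext => u; rewrite /sect !psmapE; congr (iota (c k _)).
  by apply/ffunP => i; rewrite !ffunE; case: eqP.
have e2 : [ffun=> setl l I0 t l] = t by apply/ffunP => i; rewrite !ffunE eqxx (ord1E i).
by rewrite e1 e2.
Qed.
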